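(* Let $X_1=\{(\alpha,\beta):\alpha\in(0,\pi/4],\ \beta\in[t(\alpha),\alpha]\}$ and $X_2=\{(\alpha,\beta):\alpha\in[\pi/4,\pi/2),\ \beta\in[0,\alpha]\}$. For all $(\alpha,\beta)\in X_1\cup X_2$, the competitive ratio of the $\beta$-Hedge algorithm with parameter $\beta$ (for half angle-of-view $\alpha$) equals $f_1(\alpha,\beta,r_0(\alpha,\beta))$.
   Context: Online drone coverage on a line. A drone has a fixed half angle-of-view $\alpha\in(0,\pi/2)$. A drone at a point $T=(t_x,t_y)$ with $t_y\ge 0$ covers the segment $[t_x-t_y\tan\alpha,\ t_x+t_y\tan\alpha]$ of the $x$-axis. For a point $X=(x,0)$ its feasibility cone is $\mathrm{FC}(X)=\{(u,v): v\ge 0,\ |u-x|\le v\tan\alpha\}$, and the feasibility cone of a finite set of points is the intersection of their cones. An input is a sequence $X_0=(0,0),X_1,\dots,X_n$ ($n\ge1$) of points $X_i=(x_i,0)$ revealed one at a time. A solution is a sequence of positions $P_0=(0,0),P_1,\dots,P_n$ with $P_i\in\mathrm{FC}(X_0,\dots,X_i)$; its cost is $\sum_i|P_iP_{i+1}|$. $\mathrm{OPT}$ is the minimum cost of a solution (input known in advance). A request $X_{i+1}$ is redundant if $x_{i+1}\in[\min_{j\le i}x_j,\max_{j\le i}x_j]$. An input is good if it has no redundant requests, $\min_j x_j=-1$ and $\max_j x_j\in[0,1]$. The competitive ratio is the supremum over good inputs of the algorithm's cost divided by $\mathrm{OPT}$. The $\beta$-Hedge algorithm with parameter $\beta\in[0,\alpha]$: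 if $P_{i-1}\in\mathrm{FC}(X_0,\dots,X_i)$ then $P_i=P_{i-1}$; otherwise the drone moves from $P_{i-1}$ along the ray with direction $(\operatorname{sgn}(x_i)\sin\beta,\cos\beta)$, and $P_i$ is the first point of this ray in $\mathrm{FC}(X_0,\dots,X_i)$. $f_1(\alpha,\beta,r)=\frac{2\sin\alpha}{\cos\beta(\tan\alpha+\tan\beta)}\cdot\frac{1+\frac{2\tan\beta}{\tan\alpha+\tan\beta}r}{\sqrt{1+r^2+2\cos(2\alpha)r}}$; with $A=\frac{2\tan\beta}{\tan\alpha+\tan\beta}$, $B=2\cos(2\alpha)$, $r_0(\alpha,\beta)=\frac{2A-B}{2-AB}$; and $t(\alpha)=\arctan\!\left(\frac{\sin(3\alpha)-\sin\alpha}{3\cos\alpha-\cos(3\alpha)}\right)$. *)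

(* Defs.v *)
From Stdlib Require Import Reals Lra.
Open Scope R_scope.

Definition pt := (R * R)%type.

Definition dist (p q : pt) : R :=
  sqrt ((fst p - fst q) ^ 2 + (snd p - snd q) ^ 2).

(* Feasibility cone of the point X = (x,0) for half angle-of-view alpha. *)
Definition inFC (alpha x : R) (p : pt) : Prop :=
  0 <= snd p /\ Rabs (fst p - x) <= snd p * tan alpha.

Definition inFC_upto (alpha : R) (x : nat -> R) (i : nat) (p : pt) : Prop :=
  forall j, (j <= i)%nat -> inFC alpha (x j) p.

Fixpoint path_cost (P : nat -> pt) (n : nat) : R :=
  match n with
  | O => 0
  | S k => path_cost P k + dist (P k) (P (S k))
  end.

(* An input is x_0, ..., x_n (values beyond n are irrelevant). *)
Definition good_input (n : nat) (x : nat -> R) : Prop :=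
  (1 <= n)%nat /\ x O = 0 /\
  (forall i, (1 <= i <= n)%nat ->
     ~ (exists a b, (a < i)%nat /\ (b < i)%nat /\ x a <= x i <= x b)) /\
  ((forall j, (j <= n)%nat -> -1 <= x j) /\ (exists j, (j <= n)%nat /\ x j = -1)) /\
  (exists M, 0 <= M <= 1 /\
     (forall j, (j <= n)%nat -> x j <= M) /\ (exists j, (j <= n)%nat /\ x j = M)).

Definition solution (alpha : R) (n : nat) (x : nat -> R) (P : nat -> pt) : Prop :=
  P O = (0, 0) /\ forall i, (i <= n)%nat -> inFC_upto alpha x i (P i).

Definition is_glb (E : R -> Prop) (m : R) : Prop :=
  (forall c, E c -> m <= c) /\ (forall b, (forall c, E c -> b <= c) -> b <= m).

Definition is_OPT (alpha : R) (n : nat) (x : nat -> R) (opt : R) : Prop :=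
  is_glb (fun c => exists P, solution alpha n x P /\ c = path_cost P n) opt.

Definition sgn (r : R) : R :=
  if Rlt_dec 0 r then 1 else if Rlt_dec r 0 then -1 else 0.

Definition hedge_move (beta xi : R) (p : pt) (s : R) : pt :=
  (fst p + s * (sgn xi * sin beta), snd p + s * cos beta).

Definition hedge_traj (alpha beta : R) (n : nat) (x : nat -> R) (P : nat -> pt) : Prop :=
  P O = (0, 0) /\
  forall k, (S k <= n)%nat ->
    (inFC_upto alpha x (S k) (P k) -> P (S k) = P k) /\
    (~ inFC_upto alpha x (S k) (P k) ->
       exists s, 0 <= s /\ P (S k) = hedge_move beta (x (S k)) (P k) s /\
         inFC_upto alpha x (S k) (P (S k)) /\
         (forall s', 0 <= s' < s ->
            ~ inFC_upto alpha x (S k) (hedge_move beta (x (S k)) (P k) s'))).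

Definition hedge_ratios (alpha beta : R) (r : R) : Prop :=
  exists n x P opt, good_input n x /\ hedge_traj alpha beta n x P /\
    is_OPT alpha n x opt /\ r = path_cost P n / opt.

Definition hedge_competitive_ratio (alpha beta c : R) : Prop :=
  is_lub (hedge_ratios alpha beta) c.

Definition f1 (alpha beta r : R) : R :=
  2 * sin alpha / (cos beta * (tan alpha + tan beta)) *
  ((1 + 2 * tan beta / (tan alpha + tan beta) * r) /
   sqrt (1 + r ^ 2 + 2 * cos (2 * alpha) * r)).

Definition r0 (alpha beta : R) : R :=
  let A := 2 * tan beta / (tan alpha + tan beta) in
  let B := 2 * cos (2 * alpha) in
  (2 * A - B) / (2 - A * B).

Definition t_fun (alpha : R) : R :=
  atan ((sin (3 * alpha) - sin alpha) / (3 * cos alpha - cos (3 * alpha))).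

(* Main.v *)
From Stdlib Require Import Reals Lra Psatz Rgeom.
Require Import Defs.
Open Scope R_scope.

Definition Inv (k a b l R : R) : Prop :=
  a <= -l /\ R <= b /\ 0 <= l /\ 0 <= R /\ 0 <= b + k*a /\ 0 <= -a - k*b /\
  b - R <= k * Rmax 0 (l - k*R) /\ -a - l <= k * Rmax 0 (R - k*l) /\ (b = R \/ a = -l).

Lemma Inv0 k : Inv k 0 0 0 0.
Proof.
  unfold Inv, Rmax. destruct (Rle_dec 0 (0 - k*0)); repeat split; try lra; left; lra.
Qed.

Lemma Inv_sym k a b l R : Inv k a b l R -> Inv k (-b) (-a) R l.
Proof.
  unfold Inv. intros (H1&H2&H3&H4&H5&H6&H7&H8&H9).
  repeat split; try lra; try (destruct H9; [right|left]; lra).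
Qed.

Lemma Inv_right k a b l R R' : 0 <= k <= 1 -> Inv k a b l R -> R < R' -> b < R' ->
  Inv k (a - k*(R'-b)) R' l R'.
Proof.
  intros Hk (H1&H2&H3&H4&H5&H6&H7&H8&H9) HR Hb.
  assert (Hm1: 0 <= Rmax 0 (l - k*R')) by apply Rmax_l.
  assert (Hm2: 0 <= Rmax 0 (R' - k*l)) by apply Rmax_l.
  assert (HX: 0 <= (1 - k*k)*(R' - b)) by (apply Rmult_le_pos; nra).
  unfold Inv. repeat split; try nra.
  -
    destruct H9 as [E|E].
    + subst b. revert H8. unfold Rmax. destruct (Rle_dec 0 (R - k*l)); destruct (Rle_dec 0 (R' - k*l)); intros; nra.
    + unfold Rmax. destruct (Rle_dec 0 (R' - k*l)); nra.
Qed.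

Lemma Inv_right0 k a b l R R' : 0 <= k <= 1 -> Inv k a b l R -> R < R' -> R' <= b ->
  Inv k a b l R'.
Proof.
  intros Hk (H1&H2&H3&H4&H5&H6&H7&H8&H9) HR Hb.
  destruct H9 as [E|E]; [lra|].
  assert (HX: 0 <= (1 - k*k)*(R' - R)) by (apply Rmult_le_pos; nra).
  assert (HX2: 0 <= k*k*(R' - R)) by (apply Rmult_le_pos; nra).
  pose proof (Rmax_l 0 (R' - k*l)).
  unfold Inv. repeat split; try nra.
  all: try (right; exact E).
  revert H7. unfold Rmax. destruct (Rle_dec 0 (l - k*R)); destruct (Rle_dec 0 (l - k*R')); intros; nra.
Qed.

Lemma Inv_left k a b l R l' : 0 <= k <= 1 -> Inv k a b l R -> l < l' -> -l' < a ->
  Inv k (-l') (b + k*(a + l')) l' R.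
Proof.
  intros Hk H Hl Ha.
  apply Inv_sym in H.
  pose proof (Inv_right k (-b) (-a) R l l' Hk H Hl ltac:(lra)) as H'.
  apply Inv_sym in H'.
  replace (b + k*(a+l')) with (- (-b - k*(l' - -a))) by ring. exact H'.
Qed.

Lemma Inv_left0 k a b l R l' : 0 <= k <= 1 -> Inv k a b l R -> l < l' -> a <= -l' ->
  Inv k a b l' R.
Proof.
  intros Hk H Hl Ha.
  apply Inv_sym in H.
  pose proof (Inv_right0 k (-b) (-a) R l l' Hk H Hl ltac:(lra)) as H'.
  apply Inv_sym in H'. replace a with (- - a) by ring. replace b with (- - b) by ring. exact H'.
Qed.

Lemma Inv_final k a b M : 0 <= k <= 1 -> M <= 1 -> Inv k a b 1 M ->
  b - a <= (1+k)*(1+(1-k)*M).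
Proof.
  intros Hk HM (H1&H2&H3&H4&H5&H6&H7&H8&H9).
  revert H7 H8. unfold Rmax.
  destruct (Rle_dec 0 (1 - k*M)); destruct (Rle_dec 0 (M - k*1)); intros; destruct H9; subst; nra.
Qed.

Fixpoint xmin (x : nat -> R) (i : nat) : R :=
  match i with O => x O | S j => Rmin (xmin x j) (x (S j)) end.
Fixpoint xmax (x : nat -> R) (i : nat) : R :=
  match i with O => x O | S j => Rmax (xmax x j) (x (S j)) end.

Lemma xmin_spec x i : (forall j, (j <= i)%nat -> xmin x i <= x j) /\
  exists j, (j <= i)%nat /\ x j = xmin x i.
Proof.
  induction i as [|i [IH1 [j0 [Hj0 Ej0]]]]; simpl.
  - split. intros j Hj. replace j with O by lia. lra. exists O; split; auto.
  - unfold Rmin. destruct (Rle_dec (xmin x i) (x (S i))) as [Hle|Hlt].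
    + split. intros j Hj. destruct (Nat.eq_dec j (S i)) as [->|]. lra. apply IH1; lia.
      exists j0; split; [lia|auto].
    + split. intros j Hj. destruct (Nat.eq_dec j (S i)) as [->|]. lra.
      specialize (IH1 j ltac:(lia)). lra.
      exists (S i); split; auto.
Qed.

Lemma xmax_spec x i : (forall j, (j <= i)%nat -> x j <= xmax x i) /\
  exists j, (j <= i)%nat /\ x j = xmax x i.
Proof.
  induction i as [|i [IH1 [j0 [Hj0 Ej0]]]]; simpl.
  - split. intros j Hj. replace j with O by lia. lra. exists O; split; auto.
  - unfold Rmax. destruct (Rle_dec (xmax x i) (x (S i))) as [Hle|Hlt].
    + split. intros j Hj. destruct (Nat.eq_dec j (S i)) as [->|]. lra.
      specialize (IH1 j ltac:(lia)). lra.
      exists (S i); split; auto.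
    + split. intros j Hj. destruct (Nat.eq_dec j (S i)) as [->|]. lra. apply IH1; lia.
      exists j0; split; [lia|auto].
Qed.

Lemma abs_le_inv y c : Rabs y <= c -> - c <= y <= c.
Proof. intros H. pose proof (Rle_abs y). pose proof (Rle_abs (-y)). rewrite Rabs_Ropp in H1. lra. Qed.

Lemma inFC_upto_iff alpha x i p :
  inFC_upto alpha x i p <->
  0 <= snd p /\ fst p - snd p * tan alpha <= xmin x i /\ xmax x i <= fst p + snd p * tan alpha.
Proof.
  destruct (xmin_spec x i) as [m1 [jm [Hjm Ejm]]].
  destruct (xmax_spec x i) as [M1 [jM [HjM EjM]]].
  split.
  - intros H. destruct (H jm Hjm) as [Hv Ha]. destruct (H jM HjM) as [_ Hb].
    apply abs_le_inv in Ha. apply abs_le_inv in Hb. lra.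
  - intros (Hv & Ha & Hb) j Hj. split; auto. apply Rabs_le.
    specialize (m1 j Hj). specialize (M1 j Hj). lra.
Qed.

Lemma dist_triangle p q r : dist p r <= dist p q + dist q r.
Proof.
  unfold dist. pose proof (triangle (fst p) (snd p) (fst r) (snd r) (fst q) (snd q)).
  unfold dist_euc in H. rewrite !Rsqr_pow2 in H. exact H.
Qed.

Lemma dist_self p : dist p p = 0.
Proof. unfold dist. replace ((fst p - fst p) ^ 2 + (snd p - snd p) ^ 2) with 0 by ring. apply sqrt_0. Qed.

Lemma path_cost_ge P n : dist (P O) (P n) <= path_cost P n.
Proof.
  induction n; simpl. rewrite dist_self; lra.
  pose proof (dist_triangle (P O) (P n) (P (S n))). lra.
Qed.

Lemma dist_move u v s c d : 0 <= s -> c^2 + d^2 = 1 ->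
  dist (u, v) (u + s * c, v + s * d) = s.
Proof.
  intros Hs Hcd. unfold dist; cbn [fst snd].
  replace ((u - (u + s * c)) ^ 2 + (v - (v + s * d)) ^ 2) with (s ^ 2) by nra.
  apply sqrt_pow2; auto.
Qed.

Lemma trig_setup alpha beta : 0 < alpha < PI/2 -> 0 <= beta <= alpha ->
  0 < sin alpha /\ 0 < cos alpha /\ 0 <= sin beta /\ 0 < cos beta /\
  sin beta * cos alpha <= sin alpha * cos beta.
Proof.
  intros Ha Hb. pose proof PI_RGT_0.
  repeat split.
  - apply sin_gt_0; lra.
  - apply cos_gt_0; lra.
  - apply sin_ge_0; lra.
  - apply cos_gt_0; lra.
  - pose proof (sin_ge_0 (alpha - beta) ltac:(lra) ltac:(lra)). rewrite sin_minus in H0. lra.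
Qed.

Lemma Rdiv_le_0_compat a b : 0 <= a -> 0 < b -> 0 <= a / b.
Proof. intros. unfold Rdiv. apply Rmult_le_pos; auto. left; apply Rinv_0_lt_compat; auto. Qed.

Definition pp alpha beta := sin beta + tan alpha * cos beta.
Definition qq alpha beta := tan alpha * cos beta - sin beta.
Definition kk alpha beta := qq alpha beta / pp alpha beta.

Lemma pq_facts alpha beta : 0 < alpha < PI/2 -> 0 <= beta <= alpha ->
  0 < tan alpha /\ 0 < pp alpha beta /\ 0 <= qq alpha beta /\ qq alpha beta <= pp alpha beta /\
  0 <= kk alpha beta <= 1.
Proof.
  intros Ha Hb. destruct (trig_setup alpha beta Ha Hb) as (H1&H2&H3&H4&H5).
  assert (HT: 0 < tan alpha) by (unfold tan; apply Rdiv_lt_0_compat; lra).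
  assert (Hq: 0 <= qq alpha beta).
  { unfold qq, tan. apply (Rmult_le_reg_r (cos alpha)); auto. field_simplify; try lra; nra. }
  assert (Hp: 0 < pp alpha beta) by (unfold pp; nra).
  assert (Hqp: qq alpha beta <= pp alpha beta) by (unfold qq, pp; lra).
  repeat split; auto.
  - unfold kk. apply Rdiv_le_0_compat; lra.
  - unfold kk. apply (Rmult_le_reg_r (pp alpha beta)); auto. field_simplify; lra.
Qed.

Lemma sgn_pos r : 0 < r -> sgn r = 1.
Proof. intros H. unfold sgn. destruct (Rlt_dec 0 r); lra. Qed.
Lemma sgn_neg r : r < 0 -> sgn r = -1.
Proof. intros H. unfold sgn. destruct (Rlt_dec 0 r); destruct (Rlt_dec r 0); lra. Qed.

Lemma hedge_right alpha beta x k u v Pn :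
  0 < alpha < PI/2 -> 0 <= beta <= alpha ->
  0 < x (S k) -> xmax x (S k) = x (S k) -> xmin x (S k) = xmin x k ->
  0 <= v -> u - v * tan alpha <= xmin x k -> u + v * tan alpha < x (S k) ->
  (~ inFC_upto alpha x (S k) (u, v) ->
       exists s, 0 <= s /\ Pn = hedge_move beta (x (S k)) (u, v) s /\
         inFC_upto alpha x (S k) Pn /\
         (forall s', 0 <= s' < s ->
            ~ inFC_upto alpha x (S k) (hedge_move beta (x (S k)) (u, v) s'))) ->
  exists s, 0 <= s /\ Pn = (u + s * sin beta, v + s * cos beta) /\
    s * pp alpha beta = x (S k) - (u + v * tan alpha).
Proof.
  intros Ha Hb Hx Emax Emin Hv Hav Hbv H.
  destruct (pq_facts alpha beta Ha Hb) as (HT&Hp&Hq&Hqp&Hk).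
  destruct (trig_setup alpha beta Ha Hb) as (H1&H2&H3&H4&H5).
  destruct H as (s & Hs & EP & Hfeas & Hmin).
  { rewrite inFC_upto_iff; cbn [fst snd]. lra. }
  unfold hedge_move in *. rewrite sgn_pos in * by auto. cbn [fst snd] in *.
  exists s. split; auto. split. rewrite EP. f_equal; ring.
  rewrite EP in Hfeas. rewrite inFC_upto_iff in Hfeas. cbn [fst snd] in Hfeas.
  destruct (Rle_lt_dec (s * pp alpha beta) (x (S k) - (u + v * tan alpha))) as [Hle|Hlt].
  - unfold pp in *. nra.
  - exfalso. set (s' := (x (S k) - (u + v * tan alpha)) / pp alpha beta).
    assert (Hs'0 : 0 <= s') by (unfold s'; apply Rdiv_le_0_compat; lra).
    assert (Hs'p : s' * pp alpha beta = x (S k) - (u + v * tan alpha)) by (unfold s'; field; lra).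
    assert (Hs's : s' < s).
    { apply (Rmult_lt_reg_r (pp alpha beta)); auto. lra. }
    apply (Hmin s'); [lra|].
    rewrite inFC_upto_iff; cbn [fst snd]. rewrite Emin, Emax.
    unfold pp, qq in *. split; [nra|split].
    + assert (0 <= s' * qq alpha beta) by (apply Rmult_le_pos; auto). unfold qq in H. nra.
    + nra.
Qed.

Lemma hedge_left alpha beta x k u v Pn :
  0 < alpha < PI/2 -> 0 <= beta <= alpha ->
  x (S k) < 0 -> xmin x (S k) = x (S k) -> xmax x (S k) = xmax x k ->
  0 <= v -> xmax x k <= u + v * tan alpha -> x (S k) < u - v * tan alpha ->
  (~ inFC_upto alpha x (S k) (u, v) ->
       exists s, 0 <= s /\ Pn = hedge_move beta (x (S k)) (u, v) s /\
         inFC_upto alpha x (S k) Pn /\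
         (forall s', 0 <= s' < s ->
            ~ inFC_upto alpha x (S k) (hedge_move beta (x (S k)) (u, v) s'))) ->
  exists s, 0 <= s /\ Pn = (u + s * (- sin beta), v + s * cos beta) /\
    s * pp alpha beta = (u - v * tan alpha) - x (S k).
Proof.
  intros Ha Hb Hx Emin Emax Hv Hav Hbv H.
  destruct (pq_facts alpha beta Ha Hb) as (HT&Hp&Hq&Hqp&Hk).
  destruct (trig_setup alpha beta Ha Hb) as (H1&H2&H3&H4&H5).
  destruct H as (s & Hs & EP & Hfeas & Hmin).
  { rewrite inFC_upto_iff; cbn [fst snd]. lra. }
  unfold hedge_move in *. rewrite sgn_neg in * by auto. cbn [fst snd] in *.
  exists s. split; auto. split. rewrite EP. f_equal; ring.
  rewrite EP in Hfeas. rewrite inFC_upto_iff in Hfeas. cbn [fst snd] in Hfeas.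
  destruct (Rle_lt_dec (s * pp alpha beta) ((u - v * tan alpha) - x (S k))) as [Hle|Hlt].
  - unfold pp in *. nra.
  - exfalso. set (s' := ((u - v * tan alpha) - x (S k)) / pp alpha beta).
    assert (Hs'0 : 0 <= s') by (unfold s'; apply Rdiv_le_0_compat; lra).
    assert (Hs'p : s' * pp alpha beta = (u - v * tan alpha) - x (S k)) by (unfold s'; field; lra).
    assert (Hs's : s' < s).
    { apply (Rmult_lt_reg_r (pp alpha beta)); auto. lra. }
    apply (Hmin s'); [lra|].
    rewrite inFC_upto_iff; cbn [fst snd]. rewrite Emin, Emax.
    unfold pp, qq in *. split; [nra|split].
    + nra.
    + assert (0 <= s' * qq alpha beta) by (apply Rmult_le_pos; auto). unfold qq in H. nra.
Qed.

Lemma nonred n x k : good_input n x -> (S k <= n)%nat ->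
  x (S k) < xmin x k \/ xmax x k < x (S k).
Proof.
  intros (Hn & Hx0 & Hnr & _) Hk.
  destruct (xmin_spec x k) as [_ [jm [Hjm Ejm]]].
  destruct (xmax_spec x k) as [_ [jM [HjM EjM]]].
  destruct (Rlt_le_dec (x (S k)) (xmin x k)) as [H|H]; [left; auto|].
  destruct (Rlt_le_dec (xmax x k) (x (S k))) as [H'|H']; [right; auto|].
  exfalso. apply (Hnr (S k) ltac:(lia)). exists jm, jM. split; [lia|split; [lia|lra]].
Qed.

Lemma xmin_le0 x k : x O = 0 -> xmin x k <= 0.
Proof. intros H. destruct (xmin_spec x k) as [H1 _]. specialize (H1 O ltac:(lia)). lra. Qed.
Lemma xmax_ge0 x k : x O = 0 -> 0 <= xmax x k.
Proof. intros H. destruct (xmax_spec x k) as [H1 _]. specialize (H1 O ltac:(lia)). lra. Qed.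

Lemma traj_inv alpha beta n x P :
  0 < alpha < PI/2 -> 0 <= beta <= alpha -> good_input n x -> hedge_traj alpha beta n x P ->
  forall i, (i <= n)%nat ->
    inFC_upto alpha x i (P i) /\ path_cost P i * cos beta = snd (P i) /\
    Inv (kk alpha beta) (fst (P i) - snd (P i) * tan alpha) (fst (P i) + snd (P i) * tan alpha)
        (- xmin x i) (xmax x i).
Proof.
  intros Ha Hb Hg [HP0 Htr].
  destruct (pq_facts alpha beta Ha Hb) as (HT&Hp&Hq&Hqp&Hk).
  destruct (trig_setup alpha beta Ha Hb) as (H1&H2&H3&H4&H5).
  assert (Hx0 : x O = 0) by (destruct Hg as (_&H&_); exact H).
  induction i as [|k IH]; intros Hi.
  - rewrite HP0. simpl. rewrite Hx0. split; [|split].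
    + intros j Hj. replace j with O by lia. rewrite Hx0. split; simpl; [lra|].
      rewrite Rminus_0_r, Rabs_R0. lra.
    + lra.
    + replace (0 - 0 * tan alpha) with 0 by ring. replace (0 + 0 * tan alpha) with 0 by ring.
      replace (-0) with 0 by ring. apply Inv0.
  - destruct (IH ltac:(lia)) as (Hf & Hc & HI). clear IH.
    destruct (Htr k Hi) as [Hstay Hmove].
    pose proof (xmin_le0 x k Hx0). pose proof (xmax_ge0 x k Hx0).
    destruct (P k) as [u v] eqn:EPk. cbn [fst snd] in *.
    rewrite inFC_upto_iff in Hf. cbn [fst snd] in Hf. destruct Hf as (Hv & Hau & Hbu).
    destruct (nonred n x k Hg Hi) as [Hl|Hr].
    +
      assert (Emin : xmin x (S k) = x (S k)) by (simpl; apply Rmin_right; lra).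
      assert (Emax : xmax x (S k) = xmax x k) by (simpl; apply Rmax_left; lra).
      destruct (Rle_lt_dec (u - v * tan alpha) (x (S k))) as [Hin|Hout].
      * assert (Hfe : inFC_upto alpha x (S k) (u, v)).
        { rewrite inFC_upto_iff; cbn [fst snd]. rewrite Emin, Emax. lra. }
        cbn [path_cost]. rewrite (Hstay Hfe), EPk, dist_self. cbn [fst snd].
        split; [exact Hfe|split; [lra|]]. rewrite Emin, Emax.
        apply Inv_left0 with (l := - xmin x k); auto; lra.
      * destruct (hedge_left alpha beta x k u v (P (S k)) Ha Hb ltac:(lra) Emin Emax Hv Hbu Hout Hmove)
          as (s & Hs & EP & Hsp).
        cbn [path_cost]. rewrite EP, EPk. cbn [fst snd].
        rewrite dist_move by (auto; pose proof (sin2_cos2 beta) as Hsc; unfold Rsqr in Hsc; nra).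
        split; [|split].
        -- rewrite inFC_upto_iff; cbn [fst snd]. rewrite Emin, Emax. unfold pp, qq in *. nra.
        -- nra.
        -- rewrite Emin, Emax.
           pose proof (Inv_left (kk alpha beta) _ _ _ _ (- x (S k)) Hk HI ltac:(lra) ltac:(lra)) as HI'.
           replace (u + s * - sin beta - (v + s * cos beta) * tan alpha) with (- - x (S k)).
           replace (u + s * - sin beta + (v + s * cos beta) * tan alpha) with
             (u + v * tan alpha + kk alpha beta * (u - v * tan alpha + - x (S k))).
           exact HI'.
           ++ replace (u - v * tan alpha + - x (S k)) with (s * pp alpha beta) by lra.
              unfold kk, pp, qq in *. field. lra.
           ++ unfold pp in Hsp. nra.
    +
      assert (Emax : xmax x (S k) = x (S k)) by (simpl; apply Rmax_right; lra).
      assert (Emin : xmin x (S k) = xmin x k) by (simpl; apply Rmin_left; lra).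
      destruct (Rle_lt_dec (x (S k)) (u + v * tan alpha)) as [Hin|Hout].
      * assert (Hfe : inFC_upto alpha x (S k) (u, v)).
        { rewrite inFC_upto_iff; cbn [fst snd]. rewrite Emin, Emax. lra. }
        cbn [path_cost]. rewrite (Hstay Hfe), EPk, dist_self. cbn [fst snd].
        split; [exact Hfe|split; [lra|]]. rewrite Emin, Emax.
        apply Inv_right0 with (R := xmax x k); auto; lra.
      * destruct (hedge_right alpha beta x k u v (P (S k)) Ha Hb ltac:(lra) Emax Emin Hv Hau Hout Hmove)
          as (s & Hs & EP & Hsp).
        cbn [path_cost]. rewrite EP, EPk. cbn [fst snd].
        rewrite dist_move by (auto; pose proof (sin2_cos2 beta) as Hsc; unfold Rsqr in Hsc; nra).
        split; [|split].
        -- rewrite inFC_upto_iff; cbn [fst snd]. rewrite Emin, Emax. unfold pp, qq in *. nra.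
        -- nra.
        -- rewrite Emin, Emax.
           pose proof (Inv_right (kk alpha beta) _ _ _ _ (x (S k)) Hk HI ltac:(lra) ltac:(lra)) as HI'.
           replace (u + s * sin beta - (v + s * cos beta) * tan alpha) with
             (u - v * tan alpha - kk alpha beta * (x (S k) - (u + v * tan alpha))).
           replace (u + s * sin beta + (v + s * cos beta) * tan alpha) with (x (S k)).
           exact HI'.
           ++ unfold pp in Hsp. nra.
           ++ unfold kk. rewrite <- Hsp. unfold pp, qq in *. field. lra.
Qed.

Lemma sqrt_le_sq a b x y : 0 <= a -> 0 <= b -> 0 <= x -> 0 <= y -> a^2 * x <= b^2 * y ->
  a * sqrt x <= b * sqrt y.
Proof.
  intros Ha Hb Hx Hy H.
  rewrite <- (sqrt_pow2 a Ha), <- (sqrt_pow2 b Hb), <- !sqrt_mult by (try apply pow2_ge_0; auto).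
  apply sqrt_le_1; auto; apply Rmult_le_pos; auto; apply pow2_ge_0.
Qed.

Lemma core_alg A B M l R : 0 <= A <= 1 -> -2 <= B <= 2 -> 0 < 2 - A*B ->
  0 <= (2*A - B)/(2 - A*B) -> 1 <= l -> M <= R -> 0 <= M ->
  (1 + A*M) * sqrt (1 + ((2*A - B)/(2 - A*B))^2 + B*((2*A - B)/(2 - A*B))) <=
  (1 + A*((2*A - B)/(2 - A*B))) * sqrt (l^2 + R^2 + B*l*R).
Proof.
  intros HA HB HAB Hr Hl HR HM.
  set (r0 := (2*A - B)/(2 - A*B)) in *.
  assert (E: (1 + A*r0)^2 * (l^2 + R^2 + B*l*R) - (l + A*R)^2 * (1 + r0^2 + B*r0) =
             (1 + A^2 - A*B) * (R - r0*l)^2) by (unfold r0; field; lra).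
  assert (HS: 0 <= 1 + r0^2 + B*r0).
  { assert (B*r0 >= -2*r0) by nra. pose proof (pow2_ge_0 (1 - r0)). nra. }
  assert (Hh: 0 <= l^2 + R^2 + B*l*R).
  { assert (0 <= l*R) by nra. assert (B*(l*R) >= -2*(l*R)) by nra. pose proof (pow2_ge_0 (l - R)). nra. }
  apply sqrt_le_sq; try nra.
  assert (0 <= (1 + A^2 - A*B) * (R - r0*l)^2) by (apply Rmult_le_pos; [assert (A*B <= 2*A) by nra; pose proof (pow2_ge_0 (1 - A)); nra | apply pow2_ge_0]).
  assert (H1: 0 <= 1 + A*M <= l + A*R) by (split; nra).
  assert (H2: (1 + A*M)^2 <= (l + A*R)^2) by (apply pow_incr; lra).
  apply (Rmult_le_compat_r (1 + r0^2 + B*r0)) in H2; auto.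
  lra.
Qed.

Definition AA alpha beta := 2 * tan beta / (tan alpha + tan beta).
Definition BB alpha := 2 * cos (2 * alpha).

Lemma r0_eq alpha beta : r0 alpha beta =
  (2 * AA alpha beta - BB alpha) / (2 - AA alpha beta * BB alpha).
Proof. reflexivity. Qed.

Lemma f1_eq alpha beta r : 0 < alpha < PI/2 -> 0 <= beta <= alpha ->
  f1 alpha beta r = (2 * sin alpha / pp alpha beta) *
     ((1 + AA alpha beta * r) / sqrt (1 + r^2 + BB alpha * r)).
Proof.
  intros Ha Hb. destruct (trig_setup alpha beta Ha Hb) as (H1&H2&H3&H4&H5).
  destruct (pq_facts alpha beta Ha Hb) as (HT&Hp&Hq&Hqp&Hk).
  unfold f1, AA, BB. f_equal. unfold pp in *. unfold tan in *.
  assert (0 < sin alpha / cos alpha * cos beta) by (apply Rmult_lt_0_compat; auto).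
  assert (0 <= sin beta / cos beta) by (apply Rdiv_le_0_compat; auto).
  field. repeat split; try lra.
  intro Hc. assert (0 < sin alpha * cos beta) by (apply Rmult_lt_0_compat; lra).
  assert (0 <= sin beta * cos alpha) by (apply Rmult_le_pos; lra).
  assert (0 < cos beta * (sin beta * cos alpha + sin alpha * cos beta)) by (apply Rmult_lt_0_compat; lra). lra.
Qed.

Lemma params alpha beta : 0 < alpha < PI/2 -> 0 <= beta <= alpha ->
  AA alpha beta = 2 * sin beta / pp alpha beta /\
  AA alpha beta = 1 - kk alpha beta /\
  0 <= AA alpha beta <= 1 /\ -2 < BB alpha < 2 /\ 0 < 2 - AA alpha beta * BB alpha /\
  1 + kk alpha beta = 2 * tan alpha * cos beta / pp alpha beta.
Proof.
  intros Ha Hb. destruct (trig_setup alpha beta Ha Hb) as (H1&H2&H3&H4&H5).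
  destruct (pq_facts alpha beta Ha Hb) as (HT&Hp&Hq&Hqp&Hk).
  assert (EA: AA alpha beta = 2 * sin beta / pp alpha beta).
  { unfold AA, pp in *. unfold tan at 1 3. field. split; [lra|].
    intro. assert (sin beta + tan alpha * cos beta = 0).
    { replace (sin beta + tan alpha * cos beta) with
      (cos beta * (tan alpha + sin beta / cos beta)) by (field; lra). rewrite H; ring. }
    lra. }
  assert (EAk: AA alpha beta = 1 - kk alpha beta).
  { rewrite EA. unfold kk, pp, qq in *. field. lra. }
  assert (HB: -2 < BB alpha < 2).
  { unfold BB. pose proof (cos_2a_sin alpha). pose proof (cos_2a_cos alpha). split; nra. }
  assert (HA: 0 <= AA alpha beta <= 1) by lra.
  repeat split; try lra.
  - destruct (Rle_lt_dec 0 (BB alpha)); nra.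
  - unfold kk, pp, qq in *. field. lra.
Qed.

Lemma norm_h alpha u v : 0 < alpha < PI/2 ->
  2 * sin alpha * sqrt (u^2 + v^2) =
  sqrt ((v * tan alpha - u)^2 + (u + v * tan alpha)^2 + BB alpha * (v * tan alpha - u) * (u + v * tan alpha)).
Proof.
  intros Ha. assert (Hs: 0 < sin alpha) by (apply sin_gt_0; lra).
  assert (Hc: 0 < cos alpha) by (apply cos_gt_0; lra).
  pose proof (sin2_cos2 alpha) as E. unfold Rsqr in E.
  replace ((v * tan alpha - u)^2 + (u + v * tan alpha)^2 + BB alpha * (v * tan alpha - u) * (u + v * tan alpha))
    with ((2 * sin alpha)^2 * (u^2 + v^2)).
  - rewrite sqrt_mult by (try apply pow2_ge_0; nra). rewrite sqrt_pow2 by lra. reflexivity.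
  - unfold BB. rewrite cos_2a.
    assert (Hsa: sin alpha = tan alpha * cos alpha) by (unfold tan; field; lra).
    rewrite Hsa in E |- *. set (t := tan alpha) in *. set (c := cos alpha) in *.
    assert (Hk: c*c*(1+t*t) = 1) by nra.
    apply Rminus_diag_uniq.
    match goal with |- ?L - ?R = 0 =>
      replace (L - R) with (2*(u^2+v^2*t^2)*(c*c*(1+t*t) - 1)) by ring end.
    rewrite Hk. ring.
Qed.

Lemma sol_lower alpha n x M Q :
  (exists j, (j <= n)%nat /\ x j = -1) -> (exists j, (j <= n)%nat /\ x j = M) ->
  solution alpha n x Q ->
  fst (Q n) - snd (Q n) * tan alpha <= -1 /\ M <= fst (Q n) + snd (Q n) * tan alpha /\
  0 <= snd (Q n) /\ sqrt (fst (Q n) ^ 2 + snd (Q n) ^ 2) <= path_cost Q n.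
Proof.
  intros [j1 [Hj1 E1]] [j2 [Hj2 E2]] [HQ0 HQ].
  specialize (HQ n (le_n n)).
  destruct (HQ j1 Hj1) as [Hv H1]. destruct (HQ j2 Hj2) as [_ H2].
  rewrite E1 in H1. rewrite E2 in H2.
  apply abs_le_inv in H1. apply abs_le_inv in H2.
  pose proof (path_cost_ge Q n) as Hc. rewrite HQ0 in Hc. unfold dist in Hc. cbn [fst snd] in Hc.
  replace ((0 - fst (Q n)) ^ 2 + (0 - snd (Q n)) ^ 2) with (fst (Q n) ^ 2 + snd (Q n) ^ 2) in Hc by ring.
  repeat split; lra.
Qed.

Lemma sqrt_ge_snd u v : 0 <= v -> v <= sqrt (u^2 + v^2).
Proof.
  intros Hv. rewrite <- (sqrt_pow2 v Hv) at 1. apply sqrt_le_1; try nra; try apply pow2_ge_0.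
Qed.

Lemma upper alpha beta n x P opt :
  0 < alpha < PI/2 -> 0 <= beta <= alpha -> 0 <= r0 alpha beta ->
  good_input n x -> hedge_traj alpha beta n x P -> is_OPT alpha n x opt ->
  path_cost P n / opt <= f1 alpha beta (r0 alpha beta).
Proof.
  intros Ha Hb Hr Hg Ht [Hlow Hgreat].
  destruct (trig_setup alpha beta Ha Hb) as (H1&H2&H3&H4&H5).
  destruct (pq_facts alpha beta Ha Hb) as (HT&Hp&Hq&Hqp&Hk).
  destruct (params alpha beta Ha Hb) as (EA & EAk & HA & HB & HAB & Ek1).
  pose proof Hg as (Hn & Hx0 & _ & (Hmin1 & Hmin2) & (M & HM & HM1 & HM2)).
  destruct (traj_inv alpha beta n x P Ha Hb Hg Ht n (le_n n)) as (_ & Hc & HI).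
  assert (Exmin : xmin x n = -1).
  { destruct (xmin_spec x n) as [S1 [j [Hj Ej]]]. destruct Hmin2 as [j' [Hj' Ej']].
    specialize (S1 j' Hj'). specialize (Hmin1 j Hj). lra. }
  assert (Exmax : xmax x n = M).
  { destruct (xmax_spec x n) as [S1 [j [Hj Ej]]]. destruct HM2 as [j' [Hj' Ej']].
    specialize (S1 j' Hj'). specialize (HM1 j Hj). lra. }
  rewrite Exmin, Exmax in HI. replace (- -1) with 1 in HI by ring.
  pose proof (Inv_final (kk alpha beta) _ _ M Hk ltac:(lra) HI) as Hfin.
  set (u := fst (P n)) in *. set (v := snd (P n)) in *.
  set (cost := path_cost P n) in *.
  set (F := f1 alpha beta (r0 alpha beta)).
  assert (Hcost : cost <= (1 + AA alpha beta * M) / pp alpha beta).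
  { assert (Hv2 : 2 * v * tan alpha <= (1 + kk alpha beta) * (1 + (1 - kk alpha beta) * M)) by lra.
    rewrite Ek1, <- EAk in Hv2.
    assert (cost = v / cos beta) by (field_simplify_eq; lra).
    rewrite H.
    apply (Rmult_le_reg_r (2 * tan alpha * cos beta)). nra.
    replace (v / cos beta * (2 * tan alpha * cos beta)) with (2 * v * tan alpha) by (field; lra).
    replace ((1 + AA alpha beta * M) / pp alpha beta * (2 * tan alpha * cos beta)) with
      (2 * tan alpha * cos beta / pp alpha beta * (1 + AA alpha beta * M)) by (field; lra).
    lra. }
  set (S0 := sqrt (1 + r0 alpha beta ^ 2 + BB alpha * r0 alpha beta)).
  assert (HS0 : 0 < S0).
  { apply sqrt_lt_R0. set (r := r0 alpha beta) in *.
    assert (r <= 1).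
    { unfold r. rewrite r0_eq. apply (Rmult_le_reg_r (2 - AA alpha beta * BB alpha)); auto.
      field_simplify; try lra. nra. }
    assert (0 <= (2 + BB alpha) * r) by (apply Rmult_le_pos; lra).
    pose proof (pow2_ge_0 (1 - r)).
    destruct (Req_dec r 1) as [->|Hne]; [lra|].
    assert (0 < (1 - r)^2) by (assert (1 - r <> 0) by lra; apply pow_lt; nra). nra. }
  assert (HF : F = 2 * sin alpha / pp alpha beta * ((1 + AA alpha beta * r0 alpha beta) / S0))
    by (unfold F; apply f1_eq; auto).
  assert (HAr : 0 <= 1 + AA alpha beta * r0 alpha beta) by nra.
  assert (Hsol : forall c, (exists Q, solution alpha n x Q /\ c = path_cost Q n) ->
                  cost <= F * c /\ 1 / (2 * tan alpha) <= c).
  { intros c [Q [HQ ->]].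
    destruct (sol_lower alpha n x M Q Hmin2 HM2 HQ) as (La & Lb & Lv & Lc).
    set (uq := fst (Q n)) in *. set (vq := snd (Q n)) in *.
    split.
    - pose proof (core_alg (AA alpha beta) (BB alpha) M (vq * tan alpha - uq) (uq + vq * tan alpha)
                   HA ltac:(lra) HAB ltac:(rewrite <- r0_eq; auto) ltac:(lra) Lb ltac:(lra)) as Hcore.
      rewrite <- !r0_eq in Hcore. fold S0 in Hcore.
      rewrite <- (norm_h alpha uq vq Ha) in Hcore.
      apply Rle_trans with (F * sqrt (uq ^ 2 + vq ^ 2)).
      + rewrite HF. apply Rle_trans with ((1 + AA alpha beta * M) / pp alpha beta); auto.
        apply (Rmult_le_reg_r (pp alpha beta * S0)). nra.
        replace ((1 + AA alpha beta * M) / pp alpha beta * (pp alpha beta * S0)) with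
          ((1 + AA alpha beta * M) * S0) by (field; lra).
        replace (2 * sin alpha / pp alpha beta * ((1 + AA alpha beta * r0 alpha beta) / S0) *
                 sqrt (uq ^ 2 + vq ^ 2) * (pp alpha beta * S0)) with
          ((1 + AA alpha beta * r0 alpha beta) * (2 * sin alpha * sqrt (uq ^ 2 + vq ^ 2))) by (field; lra).
        exact Hcore.
      + apply Rmult_le_compat_l; auto. rewrite HF.
        apply Rmult_le_pos. apply Rdiv_le_0_compat; lra. apply Rdiv_le_0_compat; lra.
    - pose proof (sqrt_ge_snd uq vq Lv).
      assert (1 <= 2 * vq * tan alpha) by lra.
      apply Rle_trans with vq; [|lra].
      apply (Rmult_le_reg_r (2 * tan alpha)). lra.
      replace (1 / (2 * tan alpha) * (2 * tan alpha)) with 1 by (field; lra). lra. }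
  assert (Hopt_pos : 1 / (2 * tan alpha) <= opt).
  { apply Hgreat. intros c Hc'. apply (Hsol c Hc'). }
  assert (HFpos : 0 < F).
  { rewrite HF. apply Rmult_lt_0_compat. apply Rdiv_lt_0_compat; lra. apply Rdiv_lt_0_compat; nra. }
  assert (Hopt : cost / F <= opt).
  { apply Hgreat. intros c Hc'. destruct (Hsol c Hc') as [Hc1 _].
    apply (Rmult_le_reg_r F); auto. replace (cost / F * F) with cost by (field; lra). lra. }
  assert (0 < opt).
  { apply Rlt_le_trans with (1 / (2 * tan alpha)); auto. apply Rdiv_lt_0_compat; lra. }
  apply (Rmult_le_reg_r opt); auto.
  replace (cost / opt * opt) with cost by (field; lra).
  apply (Rmult_le_reg_r (/ F)). apply Rinv_0_lt_compat; auto.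
  replace (F * opt * / F) with opt by (field; lra). exact Hopt.
Qed.

Definition pstar alpha M : pt := ((M - 1) / 2, (M + 1) / (2 * tan alpha)).
Definition qstar alpha M (j : nat) : pt := match j with O => (0, 0) | _ => pstar alpha M end.

Lemma qstar_cost alpha M m : path_cost (qstar alpha M) (S m) = dist (0, 0) (pstar alpha M).
Proof.
  induction m. simpl. ring.
  change (path_cost (qstar alpha M) (S (S m))) with
    (path_cost (qstar alpha M) (S m) + dist (qstar alpha M (S m)) (qstar alpha M (S (S m)))).
  rewrite IHm. simpl. rewrite dist_self. ring.
Qed.

Lemma opt_val alpha n x M : 0 < alpha < PI/2 -> (1 <= n)%nat -> 0 <= M <= 1 ->
  0 <= 2 * M + BB alpha -> x O = 0 ->
  (forall j, (j <= n)%nat -> -1 <= x j <= M) ->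
  (exists j, (j <= n)%nat /\ x j = -1) -> (exists j, (j <= n)%nat /\ x j = M) ->
  is_OPT alpha n x (sqrt (1 + M^2 + BB alpha * M) / (2 * sin alpha)).
Proof.
  intros Ha Hn HM HB Hx0 Hrng Hm1 HmM.
  assert (Hs: 0 < sin alpha) by (apply sin_gt_0; lra).
  assert (Hc: 0 < cos alpha) by (apply cos_gt_0; lra).
  assert (HT: 0 < tan alpha) by (unfold tan; apply Rdiv_lt_0_compat; lra).
  assert (HB2 : -2 < BB alpha < 2).
  { unfold BB. pose proof (cos_2a_sin alpha). pose proof (cos_2a_cos alpha). split; nra. }
  assert (Hstar : dist (0, 0) (pstar alpha M) = sqrt (1 + M^2 + BB alpha * M) / (2 * sin alpha)).
  { unfold dist, pstar. cbn [fst snd].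
    replace ((0 - (M - 1) / 2) ^ 2 + (0 - (M + 1) / (2 * tan alpha)) ^ 2) with
      (((M - 1) / 2) ^ 2 + ((M + 1) / (2 * tan alpha)) ^ 2) by ring.
    apply (Rmult_eq_reg_l (2 * sin alpha)); [|lra].
    rewrite norm_h by auto.
    replace ((M + 1) / (2 * tan alpha) * tan alpha - (M - 1) / 2) with 1 by (field; lra).
    replace ((M - 1) / 2 + (M + 1) / (2 * tan alpha) * tan alpha) with M by (field; lra).
    field_simplify; [|lra]. f_equal. ring. }
  split.
  - intros c [Q [HQ ->]].
    destruct (sol_lower alpha n x M Q Hm1 HmM HQ) as (La & Lb & Lv & Lc).
    eapply Rle_trans; [|exact Lc].
    apply (Rmult_le_reg_l (2 * sin alpha)); [lra|].
    rewrite norm_h by auto.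
    replace (2 * sin alpha * (sqrt (1 + M ^ 2 + BB alpha * M) / (2 * sin alpha)))
      with (sqrt (1 + M ^ 2 + BB alpha * M)) by (field; lra).
    set (l := snd (Q n) * tan alpha - fst (Q n)). set (R := fst (Q n) + snd (Q n) * tan alpha).
    assert (Hl : 1 <= l) by (unfold l; lra). assert (HR : M <= R) by (unfold R; lra).
    apply sqrt_le_1.
    + assert (BB alpha * M >= -2 * M) by nra. pose proof (pow2_ge_0 (1 - M)). nra.
    + assert (0 <= l * R) by nra. assert (BB alpha * (l * R) >= -2 * (l * R)) by nra.
      pose proof (pow2_ge_0 (l - R)). nra.
    + set (d := l - 1). set (e := R - M).
      assert (Hd : 0 <= d) by (unfold d; lra). assert (He : 0 <= e) by (unfold e; lra).
      replace l with (1 + d) by (unfold d; ring). replace R with (M + e) by (unfold e; ring).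
      assert (0 <= d * (2 + BB alpha * M)) by (apply Rmult_le_pos; nra).
      assert (0 <= e * (2 * M + BB alpha)) by (apply Rmult_le_pos; nra).
      assert (0 <= d*e) by nra.
      assert (BB alpha * (d * e) >= -2 * (d*e)) by nra.
      pose proof (pow2_ge_0 (d - e)).
      nra.
  - intros b Hb. apply Hb. exists (qstar alpha M). split.
    + split; [reflexivity|]. intros i Hi j Hj. destruct i as [|i].
      * replace j with O by lia. rewrite Hx0. unfold inFC; cbn [fst snd qstar]. split; [lra|]. rewrite Rminus_0_r, Rabs_R0. nra.
      * unfold inFC, qstar, pstar. cbn [fst snd]. destruct (Hrng j ltac:(lia)).
        split. apply Rdiv_le_0_compat; lra.
        replace ((M + 1) / (2 * tan alpha) * tan alpha) with ((M + 1) / 2) by (field; lra).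
        apply Rabs_le. lra.
    + destruct n as [|m]; [lia|]. rewrite qstar_cost. symmetry; exact Hstar.
Qed.

Lemma dist_move' p q s c d : 0 <= s -> c^2 + d^2 = 1 ->
  fst q = fst p + s * c -> snd q = snd p + s * d -> dist p q = s.
Proof.
  intros Hs Hcd E1 E2. destruct p as [u v]; destruct q as [u' v']. cbn [fst snd] in *.
  subst. apply dist_move; auto.
Qed.

Definition x3 M (j : nat) : R := match j with O => 0 | 1%nat => M | _ => -1 end.
Definition P3 alpha beta M (j : nat) : pt :=
  let s1 := M / pp alpha beta in
  let s2 := (1 - kk alpha beta * M) / pp alpha beta in
  match j with
  | O => (0, 0)
  | 1%nat => (s1 * sin beta, s1 * cos beta)
  | _ => (s1 * sin beta + s2 * (- sin beta), s1 * cos beta + s2 * cos beta)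
  end.

Lemma exhibit3 alpha beta M : 0 < alpha < PI/2 -> 0 <= beta <= alpha -> 0 < M <= 1 ->
  kk alpha beta * M < 1 -> 0 <= 2 * M + BB alpha ->
  hedge_ratios alpha beta (f1 alpha beta M).
Proof.
  intros Ha Hb HM HkM HB.
  destruct (trig_setup alpha beta Ha Hb) as (H1&H2&H3&H4&H5).
  destruct (pq_facts alpha beta Ha Hb) as (HT&Hp&Hq&Hqp&Hk).
  destruct (params alpha beta Ha Hb) as (EA & EAk & HA & HB2 & HAB & Ek1).
  assert (Hsc : sin beta ^ 2 + cos beta ^ 2 = 1) by (pose proof (sin2_cos2 beta); unfold Rsqr in *; nra).
  assert (Hsc' : (- sin beta) ^ 2 + cos beta ^ 2 = 1) by nra.
  set (s1 := M / pp alpha beta). set (s2 := (1 - kk alpha beta * M) / pp alpha beta).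
  assert (Hs1 : 0 <= s1) by (unfold s1; apply Rdiv_le_0_compat; lra).
  assert (Hs2 : 0 <= s2) by (unfold s2; apply Rdiv_le_0_compat; lra).
  assert (Es1 : s1 * pp alpha beta = M) by (unfold s1; field; lra).
  assert (Es2 : s2 * pp alpha beta = 1 - kk alpha beta * M) by (unfold s2; field; lra).
  assert (Ekq : kk alpha beta * pp alpha beta = qq alpha beta) by (unfold kk; field; lra).
  assert (m1 : xmin (x3 M) 1 = 0) by (simpl; apply Rmin_left; lra).
  assert (M1 : xmax (x3 M) 1 = M) by (simpl; apply Rmax_right; lra).
  assert (m2 : xmin (x3 M) 2 = -1) by (simpl; rewrite (Rmin_left 0 M) by lra; apply Rmin_right; lra).
  assert (M2 : xmax (x3 M) 2 = M) by (simpl; rewrite (Rmax_right 0 M) by lra; apply Rmax_left; lra).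
  assert (EP0 : P3 alpha beta M 0 = (0, 0)) by reflexivity.
  assert (EP1 : P3 alpha beta M 1 = (s1 * sin beta, s1 * cos beta)) by reflexivity.
  assert (EP2 : P3 alpha beta M 2 = (s1 * sin beta + s2 * (- sin beta), s1 * cos beta + s2 * cos beta)) by reflexivity.
  exists 2%nat, (x3 M), (P3 alpha beta M), (sqrt (1 + M^2 + BB alpha * M) / (2 * sin alpha)).
  split; [|split; [|split]].
  -
    split; [lia|split; [reflexivity|split; [|split]]].
    + intros i Hi [a [b (Ha' & Hb' & Hab)]].
      destruct i as [|[|[|i]]]; try lia.
      * destruct a as [|a]; [|lia]. destruct b as [|b]; [|lia]. simpl in Hab. lra.
      * destruct a as [|[|a]]; try lia; simpl in Hab; lra.
    + split. intros j Hj. destruct j as [|[|j]]; simpl; lra.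
      exists 2%nat. split; [lia|reflexivity].
    + exists M. split; [lra|split].
      intros j Hj. destruct j as [|[|j]]; simpl; lra.
      exists 1%nat. split; [lia|reflexivity].
  -
    split; [reflexivity|]. intros k Hkk. destruct k as [|[|k]]; try lia.
    + split.
      * intros Hf. exfalso. rewrite inFC_upto_iff, EP0, M1 in Hf. cbn [fst snd] in Hf. lra.
      * intros _. exists s1. split; [auto|split; [|split]].
        -- rewrite EP1, EP0. unfold hedge_move. cbn [fst snd]. unfold x3. rewrite sgn_pos by lra. f_equal; ring.
        -- rewrite inFC_upto_iff, EP1, m1, M1. cbn [fst snd]. unfold pp, qq in *. split; [nra|split; nra].
        -- intros s' Hs' Hf. rewrite inFC_upto_iff, EP0, M1 in Hf. unfold hedge_move in Hf. cbn [fst snd] in Hf.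
           unfold x3 in Hf. rewrite sgn_pos in Hf by lra.
           assert (s' * pp alpha beta < s1 * pp alpha beta) by (apply Rmult_lt_compat_r; lra).
           unfold pp in *. nra.
    + split.
      * intros Hf. exfalso. rewrite inFC_upto_iff, EP1, m2 in Hf. cbn [fst snd] in Hf. unfold pp, qq in *. nra.
      * intros _. exists s2. split; [auto|split; [|split]].
        -- rewrite EP2, EP1. unfold hedge_move. cbn [fst snd]. unfold x3. rewrite sgn_neg by lra. f_equal; ring.
        -- rewrite inFC_upto_iff, EP2, m2, M2. cbn [fst snd]. unfold pp, qq in *. split; [nra|split; nra].
        -- intros s' Hs' Hf. rewrite inFC_upto_iff, EP1, m2 in Hf. unfold hedge_move in Hf. cbn [fst snd] in Hf.
           unfold x3 in Hf. rewrite sgn_neg in Hf by lra.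
           assert (s' * pp alpha beta < s2 * pp alpha beta) by (apply Rmult_lt_compat_r; lra).
           unfold pp, qq in *. nra.
  -
    apply opt_val; auto; try lra.
    + intros j Hj. destruct j as [|[|j]]; simpl; lra.
    + exists 2%nat. split; [lia|reflexivity].
    + exists 1%nat. split; [lia|reflexivity].
  -
    change (path_cost (P3 alpha beta M) 2) with
      (0 + dist (P3 alpha beta M 0) (P3 alpha beta M 1) + dist (P3 alpha beta M 1) (P3 alpha beta M 2)).
    rewrite (dist_move' _ _ s1 (sin beta) (cos beta)) by (auto; rewrite ?EP0, ?EP1; cbn [fst snd]; ring).
    rewrite (dist_move' _ _ s2 (- sin beta) (cos beta)) by (auto; rewrite ?EP1, ?EP2; cbn [fst snd]; ring).
    rewrite f1_eq by auto.
    assert (Hsq : 0 < sqrt (1 + M ^ 2 + BB alpha * M)).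
    { apply sqrt_lt_R0. assert (BB alpha * M > -2 * M) by nra. pose proof (pow2_ge_0 (1 - M)). nra. }
    assert (Hsum : s1 + s2 = (1 + AA alpha beta * M) / pp alpha beta).
    { unfold s1, s2. rewrite EAk. field. lra. }
    replace (0 + s1 + s2) with ((1 + AA alpha beta * M) / pp alpha beta) by (rewrite <- Hsum; ring).
    field. split; lra.
Qed.

Definition x2 (j : nat) : R := match j with O => 0 | _ => -1 end.
Definition P2 alpha beta (j : nat) : pt :=
  let s := 1 / pp alpha beta in
  match j with
  | O => (0, 0)
  | _ => (s * (- sin beta), s * cos beta)
  end.

Lemma exhibit2 alpha beta : 0 < alpha < PI/2 -> 0 <= beta <= alpha -> 0 <= BB alpha ->
  hedge_ratios alpha beta (f1 alpha beta 0).
Proof.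
  intros Ha Hb HB.
  destruct (trig_setup alpha beta Ha Hb) as (H1&H2&H3&H4&H5).
  destruct (pq_facts alpha beta Ha Hb) as (HT&Hp&Hq&Hqp&Hk).
  destruct (params alpha beta Ha Hb) as (EA & EAk & HA & HB2 & HAB & Ek1).
  assert (Hsc : sin beta ^ 2 + cos beta ^ 2 = 1) by (pose proof (sin2_cos2 beta); unfold Rsqr in *; nra).
  assert (Hsc' : (- sin beta) ^ 2 + cos beta ^ 2 = 1) by nra.
  set (s := 1 / pp alpha beta).
  assert (Hs : 0 <= s) by (unfold s; apply Rdiv_le_0_compat; lra).
  assert (Es : s * pp alpha beta = 1) by (unfold s; field; lra).
  assert (m1 : xmin x2 1 = -1) by (simpl; apply Rmin_right; lra).
  assert (M1 : xmax x2 1 = 0) by (simpl; apply Rmax_left; lra).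
  assert (EP0 : P2 alpha beta 0 = (0, 0)) by reflexivity.
  assert (EP1 : P2 alpha beta 1 = (s * (- sin beta), s * cos beta)) by reflexivity.
  exists 1%nat, x2, (P2 alpha beta), (sqrt (1 + 0^2 + BB alpha * 0) / (2 * sin alpha)).
  split; [|split; [|split]].
  - split; [lia|split; [reflexivity|split; [|split]]].
    + intros i Hi [a [b (Ha' & Hb' & Hab)]].
      destruct i as [|[|i]]; try lia.
      destruct a as [|a]; [|lia]. simpl in Hab. lra.
    + split. intros j Hj. destruct j as [|j]; simpl; lra.
      exists 1%nat. split; [lia|reflexivity].
    + exists 0. split; [lra|split].
      intros j Hj. destruct j as [|j]; simpl; lra.
      exists 0%nat. split; [lia|reflexivity].
  - split; [reflexivity|]. intros k Hkk. destruct k as [|k]; try lia.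
    split.
    * intros Hf. exfalso. rewrite inFC_upto_iff, EP0, m1 in Hf. cbn [fst snd] in Hf. lra.
    * intros _. exists s. split; [auto|split; [|split]].
      -- rewrite EP1, EP0. unfold hedge_move. cbn [fst snd]. unfold x2. rewrite sgn_neg by lra. f_equal; ring.
      -- rewrite inFC_upto_iff, EP1, m1, M1. cbn [fst snd]. unfold pp, qq in *. split; [nra|split; nra].
      -- intros s' Hs' Hf. rewrite inFC_upto_iff, EP0, m1 in Hf. unfold hedge_move in Hf. cbn [fst snd] in Hf.
         unfold x2 in Hf. rewrite sgn_neg in Hf by lra.
         assert (s' * pp alpha beta < s * pp alpha beta) by (apply Rmult_lt_compat_r; lra).
         unfold pp in *. nra.
  - apply opt_val; auto; try lra.
    + intros j Hj. destruct j as [|j]; simpl; lra.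
    + exists 1%nat. split; [lia|reflexivity].
    + exists 0%nat. split; [lia|reflexivity].
  - change (path_cost (P2 alpha beta) 1) with
      (0 + dist (P2 alpha beta 0) (P2 alpha beta 1)).
    rewrite (dist_move' _ _ s (- sin beta) (cos beta)) by (auto; rewrite ?EP0, ?EP1; cbn [fst snd]; ring).
    rewrite f1_eq by auto.
    replace (1 + 0 ^ 2 + BB alpha * 0) with 1 by ring. rewrite sqrt_1.
    unfold s. field. lra.
Qed.

Lemma Qv_eq alpha : 0 < alpha < PI/2 ->
  (sin (3 * alpha) - sin alpha) / (3 * cos alpha - cos (3 * alpha)) =
  (cos alpha ^ 2 - sin alpha ^ 2) * tan alpha / (cos alpha ^ 2 + 3 * sin alpha ^ 2).
Proof.
  intros Ha. assert (Hs: 0 < sin alpha) by (apply sin_gt_0; lra).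
  assert (Hc: 0 < cos alpha) by (apply cos_gt_0; lra).
  pose proof (sin2_cos2 alpha) as E. unfold Rsqr in E.
  replace (3 * alpha) with (2 * alpha + alpha) by ring.
  rewrite sin_plus, cos_plus, sin_2a, cos_2a.
  assert (E1: 2 * sin alpha * cos alpha * cos alpha + (cos alpha * cos alpha - sin alpha * sin alpha) * sin alpha - sin alpha
     = 2 * sin alpha * (cos alpha ^ 2 - sin alpha ^ 2)) by nra.
  assert (E2: 3 * cos alpha - ((cos alpha * cos alpha - sin alpha * sin alpha) * cos alpha - 2 * sin alpha * cos alpha * sin alpha)
     = 2 * cos alpha * (cos alpha ^ 2 + 3 * sin alpha ^ 2)) by nra.
  rewrite E1, E2. unfold tan. field. split; [lra|]. nra.
Qed.

Lemma region alpha beta :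
  ((0 < alpha <= PI / 4 /\ t_fun alpha <= beta <= alpha) \/
   (PI / 4 <= alpha < PI / 2 /\ 0 <= beta <= alpha)) ->
  0 < alpha < PI/2 /\ 0 <= beta <= alpha /\ 0 <= 2 * AA alpha beta - BB alpha.
Proof.
  pose proof PI_RGT_0.
  intros [[Ha [Ht Hb]] | [Ha Hb]].
  - assert (Ha' : 0 < alpha < PI/2) by lra.
    assert (Hs: 0 < sin alpha) by (apply sin_gt_0; lra).
    assert (Hc: 0 < cos alpha) by (apply cos_gt_0; lra).
    assert (HT: 0 < tan alpha) by (unfold tan; apply Rdiv_lt_0_compat; lra).
    assert (Hc2 : 0 <= cos alpha ^ 2 - sin alpha ^ 2).
    { pose proof (cos_ge_0 (2 * alpha) ltac:(lra) ltac:(lra)). rewrite cos_2a in H0. nra. }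
    unfold t_fun in Ht. rewrite (Qv_eq alpha Ha') in Ht.
    set (Q := (cos alpha ^ 2 - sin alpha ^ 2) * tan alpha / (cos alpha ^ 2 + 3 * sin alpha ^ 2)) in *.
    assert (HQ : 0 <= Q) by (unfold Q; apply Rdiv_le_0_compat; nra).
    assert (Hat : 0 <= atan Q).
    { destruct HQ as [HQ|HQ]. left. rewrite <- atan_0. apply atan_increasing; auto.
      rewrite <- HQ, atan_0. lra. }
    assert (Hb0 : 0 <= beta <= alpha) by lra.
    assert (HtQ : Q <= tan beta).
    { destruct (Rle_lt_or_eq_dec _ _ Ht) as [Hlt|Heq].
      - left. rewrite <- (tan_atan Q) at 1. pose proof (atan_bound Q).
        apply tan_increasing; lra.
      - rewrite <- Heq, tan_atan. lra. }
    repeat split; try lra.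
    destruct (trig_setup alpha beta Ha' Hb0) as (H1&H2&H3&H4&H5).
    destruct (pq_facts alpha beta Ha' Hb0) as (HT'&Hp&Hq&Hqp&Hk).
    destruct (params alpha beta Ha' Hb0) as (EA & _).
    rewrite EA. unfold BB. rewrite cos_2a.
    unfold Q in HtQ. unfold tan at 2 in HtQ.
    assert (Hd : 0 < cos alpha ^ 2 + 3 * sin alpha ^ 2) by nra.
    apply Rmult_le_compat_r with (r := (cos alpha ^ 2 + 3 * sin alpha ^ 2) * cos beta) in HtQ; [|nra].
    replace (sin beta / cos beta * ((cos alpha ^ 2 + 3 * sin alpha ^ 2) * cos beta))
      with (sin beta * (cos alpha ^ 2 + 3 * sin alpha ^ 2)) in HtQ by (field; lra).
    replace ((cos alpha ^ 2 - sin alpha ^ 2) * tan alpha / (cos alpha ^ 2 + 3 * sin alpha ^ 2) *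
             ((cos alpha ^ 2 + 3 * sin alpha ^ 2) * cos beta))
      with ((cos alpha ^ 2 - sin alpha ^ 2) * (tan alpha * cos beta)) in HtQ by (field; lra).
    pose proof (sin2_cos2 alpha) as E. unfold Rsqr in E.
    assert (Hkey : (cos alpha * cos alpha - sin alpha * sin alpha) * pp alpha beta <= 2 * sin beta).
    { unfold pp. nra. }
    apply (Rmult_le_reg_r (pp alpha beta)); auto.
    replace ((2 * (2 * sin beta / pp alpha beta) - 2 * (cos alpha * cos alpha - sin alpha * sin alpha)) * pp alpha beta)
      with (2 * (2 * sin beta - (cos alpha * cos alpha - sin alpha * sin alpha) * pp alpha beta)) by (field; lra).
    lra.
  - assert (Ha' : 0 < alpha < PI/2) by lra.
    repeat split; try lra.
    destruct (params alpha beta Ha' Hb) as (_ & _ & HA & _).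
    assert (cos (2 * alpha) <= 0) by (apply cos_le_0; lra).
    unfold BB. lra.
Qed.

Theorem lemma8 (alpha beta : R) :
  ((0 < alpha <= PI / 4 /\ t_fun alpha <= beta <= alpha) \/
   (PI / 4 <= alpha < PI / 2 /\ 0 <= beta <= alpha)) ->
  hedge_competitive_ratio alpha beta (f1 alpha beta (r0 alpha beta)).
Proof.
  intros H. destruct (region alpha beta H) as (Ha & Hb & H2AB).
  destruct (params alpha beta Ha Hb) as (EA & EAk & HA & HB2 & HAB & Ek1).
  assert (Er : r0 alpha beta * (2 - AA alpha beta * BB alpha) = 2 * AA alpha beta - BB alpha).
  { rewrite r0_eq. field. lra. }
  set (A := AA alpha beta) in *. set (B := BB alpha) in *. set (r := r0 alpha beta) in *.
  assert (Hr0 : 0 <= r).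
  { apply (Rmult_le_reg_r (2 - A * B)); auto. lra. }
  assert (Hr1 : r <= 1).
  { apply (Rmult_le_reg_r (2 - A * B)); auto. nra. }
  assert (Hr2 : 0 <= 2 * r + B).
  { apply (Rmult_le_reg_r (2 - A * B)); auto.
    assert (E2 : (2 * r + B) * (2 - A * B) = A * (4 - B * B)) by nra.
    rewrite E2. rewrite Rmult_0_l. apply Rmult_le_pos; nra. }
  assert (Hkr : kk alpha beta * r < 1).
  { replace (kk alpha beta) with (1 - A) by lra.
    destruct (Req_dec A 0) as [HA0|HA0].
    - rewrite HA0 in Er. nra.
    - nra. }
  split.
  - intros q (n & x & P & opt & Hg & Ht & Ho & ->). apply (upper alpha beta n x P opt); auto.
  - intros b Hub. apply Hub.
    destruct (Req_dec r 0) as [Hz|Hz].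
    + rewrite Hz. apply exhibit2; auto. rewrite Hz, Rmult_0_l in Er. change (0 <= B). lra.
    + apply exhibit3; auto. lra.
Qed.
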